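(* Let $B_i=(\underline{a}_i,\overline{a}_i)\times(\underline{b}_i,\overline{b}_i)\subset\mathbb{R}^2$, $i=1,\dots,N$, be rectangles, $d$ a positive integer, $p=\binom{d+2}{2}$. Let $$V(B_1,\dots,B_N)=\{f\in\mathbb{Z}[x,y]\mid \{(x,y):f(x,y)=0\}\cap B_i\neq\emptyset \text{ for all } i\}.$$ Let $\Delta_d:\mathbb{R}^{2p}\to\mathbb{R}$ be $\Delta_d(x_1,y_1,\dots,x_p,y_p)=\det M_d(x_1,y_1,\dots,x_p,y_p)$, where $M_d$ is the $p\times p$ matrix whose $i$-th column is $\mathbf{v}_d(x_i,y_i)$ and $\mathbf{v}_d$ is the vector of all $p$ monomials in $x,y$ of total degree at most $d$. If for at least one choice of indices $1\le j_1<j_2<\cdots<j_p\le N$ the function $\Delta_d$ is strictly positive at every point of $B_{j_1}\times\cdots\times B_{j_p}\subset\mathbb{R}^{2p}$, or strictly negative at every point of it, then $$\min\{\deg f\mid f\in V(B_1,\dots,B_N),\ f\neq0\}\ge d+1.$$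
   Context: $\mathbf{v}_d=[1,x,y,x^2,xy,y^2,\dots,x^d,\dots,y^d]^T$ and $\mathbf{v}_d(x_i,y_i)$ is its evaluation at $(x_i,y_i)$. *)

(* Defs.v *)
From HB Require Import structures.
From mathcomp Require Import all_boot all_order all_algebra.
From mathcomp Require Import reals.
From mathcomp Require Import mpoly.
Set Implicit Arguments. Unset Strict Implicit. Unset Printing Implicit Defensive.
Import Order.TTheory GRing.Theory Num.Theory.
Local Open Scope ring_scope.

(* Exponent pairs (i, j) of the monomials x^i y^j of total degree <= d, in the
   order 1, x, y, x^2, xy, y^2, ..., x^d, ..., y^d. There are 'C(d+2,2) of them. *)
Definition monos (d : nat) : seq (nat * nat) :=
  flatten [seq [seq (k - j, j)%N | j <- iota 0 k.+1] | k <- iota 0 d.+1].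

Definition nmon (d : nat) : nat := 'C(d.+2, 2).

Definition Mvander (R : comRingType) (d : nat) (pt : 'I_(nmon d) -> R * R)
  : 'M[R]_(nmon d) :=
  \matrix_(i < nmon d, j < nmon d)
     ((pt j).1 ^+ (nth (0, 0)%N (monos d) i).1 *
      (pt j).2 ^+ (nth (0, 0)%N (monos d) i).2).

Definition Delta (R : comRingType) (d : nat) (pt : 'I_(nmon d) -> R * R) : R :=
  \det (Mvander pt).

Definition evalZ (R : realType) (f : {mpoly int[2]}) (x y : R) : R :=
  (map_mpoly (fun z : int => z%:~R) f).@[[ffun i : 'I_2 => if i == ord0 then x else y]].

Definition tdeg (f : {mpoly int[2]}) : nat := (msize f).-1.

Definition in_box (R : realType) (alo ahi blo bhi : R) (x y : R) : Prop :=
  alo < x < ahi /\ blo < y < bhi.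

Definition Vset (R : realType) (N : nat) (alo ahi blo bhi : 'I_N -> R)
  (f : {mpoly int[2]}) : Prop :=
  forall i : 'I_N, exists x y : R,
    in_box (alo i) (ahi i) (blo i) (bhi i) x y /\ evalZ f x y = 0.

(* Main.v *)
Require Import Defs.
From HB Require Import structures.
From mathcomp Require Import all_boot all_order all_algebra.
From mathcomp Require Import reals.
From mathcomp Require Import mpoly.
Import Order.TTheory GRing.Theory Num.Theory.
Local Open Scope ring_scope.

Definition diagm (k : nat) := [seq (k - j, j)%N | j <- iota 0 k.+1].

Lemma monosS d : monos d.+1 = monos d ++ diagm d.+1.
Proof.
by rewrite /monos -(addn1 d.+1) iotaD map_cat flatten_cat /= cats0 add0n.
Qed.

Lemma mem_diagm k a b : ((a, b) \in diagm k) = (a + b == k)%N.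
Proof.
apply/mapP/idP.
  by case=> j; rewrite mem_iota add0n => /andP[_ hj] [-> ->]; rewrite subnK.
move=> /eqP <-; exists b; first by rewrite mem_iota /= ltnS leq_addl.
by rewrite addnK.
Qed.

Lemma mem_monos d a b : ((a, b) \in monos d) = (a + b <= d)%N.
Proof.
elim: d => [|d IH].
  by rewrite /monos /= mem_seq1 xpair_eqE; case: a; case: b.
by rewrite monosS mem_cat IH mem_diagm [in RHS]leq_eqVlt ltnS orbC.
Qed.

Lemma uniq_diagm k : uniq (diagm k).
Proof.
rewrite map_inj_in_uniq ?iota_uniq // => i j _ _ [] _ ->. done.
Qed.

Lemma uniq_monos d : uniq (monos d).
Proof.
elim: d => [|d IH]; first by [].
rewrite monosS cat_uniq IH uniq_diagm andbT andTb.
apply/hasPn => -[a b] /=; rewrite mem_diagm mem_monos => /eqP ->.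
by rewrite ltnn.
Qed.

Lemma size_monos d : size (monos d) = nmon d.
Proof.
rewrite /nmon; elim: d => [|d IH]; first by [].
rewrite monosS size_cat IH size_map size_iota [in RHS]binS bin1.
by [].
Qed.

Definition o1 : 'I_2 := @Ordinal 2 1 (erefl true).

Definition mk (ab : nat * nat) : 'X_{1..2} := [multinom [tuple ab.1; ab.2]].

Lemma mk0 ab : mk ab ord0 = ab.1. Proof. by []. Qed.
Lemma mk1 ab : mk ab o1 = ab.2. Proof. by []. Qed.

Lemma mkK (m : 'X_{1..2}) : mk (m ord0, m o1) = m.
Proof.
apply/mnmP => -[[|[|k]] hi] //.
  by rewrite (_ : Ordinal hi = ord0) //; apply/val_inj.
by rewrite (_ : Ordinal hi = o1) //; apply/val_inj.
Qed.

Lemma mk_inj : injective mk.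
Proof. by move=> [a b] [c e] H; have := mk0 (a,b); have := mk1 (a,b); rewrite H mk0 mk1 /= => -> ->. Qed.

Lemma sum_sub (T : eqType) (R : nmodType) (s1 s2 : seq T) (G : T -> R) :
  uniq s1 -> uniq s2 -> {subset s1 <= s2} ->
  (forall x, x \notin s1 -> G x = 0) ->
  \sum_(x <- s1) G x = \sum_(x <- s2) G x.
Proof.
move=> u1 u2 hsub G0.
rewrite [RHS](bigID (fun x => x \in s1)) /= [X in _ + X]big1 ?addr0; last first.
  by move=> x /G0.
rewrite -[RHS]big_filter; apply: perm_big; apply: uniq_perm => //.
  exact: filter_uniq.
move=> x; rewrite mem_filter; case: (boolP (x \in s1)) => //= hx.
by rewrite hsub.
Qed.

Lemma evalZE (R : realType) (f : {mpoly int[2]}) (x y : R) :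
  evalZ f x y = \sum_(m <- msupp f) (f@_m)%:~R * (x ^+ m ord0 * y ^+ m o1).
Proof.
rewrite /evalZ mevalE (perm_big _ (msupp_map_mpoly _ intr_inj)).
apply: eq_bigr => m _; rewrite mcoeff_map_mpoly !big_ord_recl big_ord0 mulr1 !ffunE /=.
by rewrite (_ : lift ord0 ord0 = o1) //; apply/val_inj.
Qed.

Theorem corollary4 (R : realType) (N : nat) (alo ahi blo bhi : 'I_N -> R)
  (d : nat) (hd : (0 < d)%N) :
  (exists j : 'I_(nmon d) -> 'I_N,
     (forall k l : 'I_(nmon d), (k < l)%N -> (j k < j l)%N) /\
     ((forall pt : 'I_(nmon d) -> R * R,
         (forall k, in_box (alo (j k)) (ahi (j k)) (blo (j k)) (bhi (j k))
                           (pt k).1 (pt k).2) ->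
         0 < Delta pt) \/
      (forall pt : 'I_(nmon d) -> R * R,
         (forall k, in_box (alo (j k)) (ahi (j k)) (blo (j k)) (bhi (j k))
                           (pt k).1 (pt k).2) ->
         Delta pt < 0))) ->
  forall f : {mpoly int[2]}, Vset alo ahi blo bhi f -> f != 0 ->
    (d.+1 <= tdeg f)%N.
Proof.
move=> [j [_ Hs]] f Vf fnz; rewrite ltnNge; apply/negP => hdeg.
have [pt Hpt] : exists pt : 'I_(nmon d) -> R * R, forall k,
    in_box (alo (j k)) (ahi (j k)) (blo (j k)) (bhi (j k)) (pt k).1 (pt k).2
    /\ evalZ f (pt k).1 (pt k).2 = 0.
  apply: (@fin_all_exists _ (fun _ => (R * R)%type)
    (fun k (xy : R * R) => in_box (alo (j k)) (ahi (j k)) (blo (j k)) (bhi (j k)) xy.1 xy.2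
    /\ evalZ f xy.1 xy.2 = 0)) => k; have [x [y H]] := Vf (j k); by exists (x, y).
have Dnz : Delta pt != 0.
  case: Hs => H; have := H pt (fun k => (Hpt k).1).
    by move=> /lt0r_neq0.
  by move=> /ltr0_neq0.
have degm : forall m, m \in msupp f -> (m ord0 + m o1 <= d)%N.
  move=> m /msize_mdeg_lt; rewrite mdegE !big_ord_recl big_ord0 addn0 => H.
  rewrite /tdeg in hdeg; move: H hdeg; case: (msize f) => [|n] /= H1 H2; first by rewrite ltn0 in H1.
  rewrite ltnS in H1; rewrite (_ : o1 = lift ord0 ord0); last exact/val_inj.
  exact: (leq_trans H1 H2).
pose c : 'rV[R]_(nmon d) :=
  \row_i ((f@_(mk (nth (0, 0)%N (monos d) i)))%:~R : R).
move/negP: Dnz; apply; apply/det0P; exists c.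
  have [m mf] : exists m, m \in msupp f.
    case E: (msupp f) => [|m s]; last by exists m; rewrite mem_head.
    by move: fnz; rewrite (msuppnil0 E) eqxx.
  have hi : (index (m ord0, m o1) (monos d) < nmon d)%N.
    by rewrite -size_monos index_mem mem_monos degm.
  apply/negP => /eqP /rowP /(_ (Ordinal hi)); rewrite !mxE /=.
  rewrite nth_index ?mem_monos ?degm // mkK => /eqP; rewrite intr_eq0.
  by rewrite mcoeff_eq0 mf.
apply/rowP => k; rewrite !mxE; apply: eq_trans (Hpt k).2; rewrite evalZE.
set x := (pt k).1; set y := (pt k).2.
pose G m := (f@_m)%:~R * (x ^+ m ord0 * y ^+ m o1) : R.
rewrite (@sum_sub _ _ _ (map mk (monos d)) G); last first.
- by move=> m; rewrite mcoeff_msupp negbK /G => /eqP ->; rewrite mul0r.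
- move=> m mf; rewrite -(mkK m); apply: map_f; rewrite mem_monos; exact: degm.
- by rewrite (map_inj_uniq mk_inj) uniq_monos.
- exact: msupp_uniq.
rewrite big_map (big_nth (0, 0)%N) big_mkord size_monos.
apply: eq_bigr => i _; rewrite !mxE /G mk0 mk1.
by [].
Qed.
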